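(* Let $G=(V,E)$ be a connected graph with at least two nodes, let $v\in V$ be any node, and let $P_{\mathrm{FSTAB}}(G)=\{\bm{x}\in\mathbb{R}^V: x_u+x_w\le 1 \text{ for all } uw\in E,\ \bm{x}\ge\bm{0}\}$, with circuits taken with respect to this linear description. Then $\mathcal{CD}(P_{\mathrm{FSTAB}}(G))=\mathcal{O}(\varepsilon(v))$, i.e. there is an absolute constant $C$ (independent of $G$ and $v$) with $\mathcal{CD}(P_{\mathrm{FSTAB}}(G))\le C\cdot\varepsilon(v)$.
   Context: The eccentricity $\varepsilon(v)$ is the smallest $k$ such that every node of $G$ is at graph distance at most $k$ from $v$. Circuits: for a polytope $P=\{\bm{x}: A\bm{x}=\bm{b},\ B\bm{x}\le \bm{d}\}$ given by a fixed linear system, a nonzero vector $\bm{g}$ is a circuit of $P$ if $A\bm{g}=\bm{0}$ and $\operatorname{supp}(B\bm{g})$ is inclusion-minimal among the sets $\operatorname{supp}(B\bm{y})$ with $A\bm{y}=\bm{0}$, $\bm{y}\neq\bm{0}$. A point $\bm{x}''\in P$ is one circuit step from $\bm{x}'\in P$ if $\bm{x}''=\bm{x}'+\alpha\bm{c}$ for a circuit $\bm{c}$ and $\alpha>0$ maximal such that $\bm{x}'+\alpha\bm{c}\in P$. A circuit walk of length $l$ is a sequence $\bm{z}^0,\dots,\bm{z}^l$ in $P$ with each $\bm{z}^i$ one circuit step from $\bm{z}^{i-1}$; the circuit distance is the length of a shortest circuit walk from one point to another, and $\mathcal{CD}(P)$ is the maximum circuit distance over ordered pairs of vertices of $P$.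 *)

(* Defs.v *)
From HB Require Import structures.
From mathcomp Require Import all_boot all_order all_algebra.
From mathcomp Require Import reals.
Set Implicit Arguments. Unset Strict Implicit. Unset Printing Implicit Defensive.
Import Order.TTheory GRing.Theory Num.Theory.
Local Open Scope ring_scope.

Section FSTAB.
Variables (R : realType) (T : finType) (e : rel T).

Definition dist_le (v w : T) (k : nat) : Prop :=
  exists p : seq T, [/\ path e v p, last v p = w & (size p <= k)%N].

Definition within (v : T) (k : nat) : Prop := forall w, dist_le v w k.

Definition is_eccentricity (v : T) (k : nat) : Prop :=
  within v k /\ forall j, within v j -> (k <= j)%N.

(* Linear description of P_FSTAB(G):  B x <= d with rows
   inl u      :  - x_u         <= 0   (nonnegativity)
   inr (u,w)  :  x_u + x_w     <= 1   for each edge uw (e u w);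
   no equality constraints (A is empty). *)
Definition is_row (r : T + (T * T)) : bool :=
  match r with inl _ => true | inr (u, w) => e u w end.

Definition Bx (x : T -> R) (r : T + (T * T)) : R :=
  match r with inl u => - x u | inr (u, w) => x u + x w end.

Definition rhs (r : T + (T * T)) : R :=
  match r with inl _ => 0 | inr _ => 1 end.

Definition inP (x : T -> R) : Prop := forall r, is_row r -> Bx x r <= rhs r.

Definition suppB (g : T -> R) : {set T + (T * T)} :=
  [set r | is_row r && (Bx g r != 0)].

Definition nonzero (g : T -> R) : Prop := exists u, g u != 0.

Definition circuit (g : T -> R) : Prop :=
  nonzero g /\ forall y, nonzero y -> suppB y \subset suppB g -> suppB y = suppB g.

Definition add_scaled (x : T -> R) (a : R) (c : T -> R) : T -> R :=
  fun u => x u + a * c u.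

Definition circuit_step (x1 x2 : T -> R) : Prop :=
  exists (c : T -> R) (a : R),
    [/\ circuit c, 0 < a, x2 = add_scaled x1 a c, inP x2 &
        forall b, a < b -> ~ inP (add_scaled x1 b c)].

Inductive circuit_walk : (T -> R) -> (T -> R) -> nat -> Prop :=
| cw_nil x : circuit_walk x x 0
| cw_cons x z y l : circuit_step x z -> circuit_walk z y l ->
    circuit_walk x y l.+1.

Definition vertex (x : T -> R) : Prop :=
  inP x /\ forall (y z : T -> R) (l : R), inP y -> inP z -> 0 < l -> l < 1 ->
    x = (fun u => l * y u + (1 - l) * z u) -> y = z.

End FSTAB.

(* Main.v *)
Require Import Defs.
From HB Require Import structures.
From mathcomp Require Import all_boot all_order all_algebra.
From mathcomp Require Import reals.
From mathcomp Require Import ring lra zify.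
From Stdlib Require Import FunctionalExtensionality.
Import Order.TTheory GRing.Theory Num.Theory.
Local Open Scope ring_scope.
Set Implicit Arguments. Unset Strict Implicit. Unset Printing Implicit Defensive.


Section Gen.
Variables (R : realType) (T : finType) (e : rel T).

Lemma Bx_add (x : T -> R) a c rho : Bx (add_scaled x a c) rho = Bx x rho + a * Bx c rho.
Proof. by case: rho => [u|[u w]] /=; rewrite /add_scaled; ring. Qed.

Lemma Bx_scale (c : T -> R) a rho : Bx (fun u => a * c u) rho = a * Bx c rho.
Proof. by case: rho => [u|[u w]] /=; ring. Qed.

Lemma mk_step (x1 x2 c : T -> R) a rho :
  circuit e c -> 0 < a -> x2 = add_scaled x1 a c -> inP e x2 ->
  is_row e rho -> Bx x2 rho = rhs R rho -> 0 < Bx c rho -> circuit_step e x1 x2.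
Proof.
move=> cc a0 E P2 rr tight pos; exists c, a; split => // b ab Pb.
have := Pb rho rr; rewrite Bx_add.
have -> : Bx x1 rho = Bx x2 rho - a * Bx c rho by rewrite E Bx_add; ring.
rewrite tight => H.
have : 0 < (b - a) * Bx c rho by apply: mulr_gt0 => //; rewrite subr_gt0.
lra.
Qed.

Lemma suppB_scale (c : T -> R) a : a != 0 -> suppB e (fun u => a * c u) = suppB e c.
Proof.
move=> a0; apply/setP => rho; rewrite !inE Bx_scale mulf_eq0 negb_or a0 //.
Qed.

Lemma circuit_opp (c : T -> R) : circuit e c -> circuit e (fun u => - c u).
Proof.
have E : forall (g : T -> R), (fun u => - g u) = (fun u => (-1) * g u).
  by move=> g; apply: functional_extensionality => u; ring.
rewrite E => [[[u cu] H]]; split.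
  by exists u; rewrite mulN1r oppr_eq0.
move=> y ny; rewrite suppB_scale ?oppr_eq0 ?oner_eq0 //; exact: H.
Qed.

Lemma mk_bistep (x1 x2 c : T -> R) a rho1 rho2 :
  circuit e c -> 0 < a -> x2 = add_scaled x1 a c -> inP e x1 -> inP e x2 ->
  is_row e rho2 -> Bx x2 rho2 = rhs R rho2 -> 0 < Bx c rho2 ->
  is_row e rho1 -> Bx x1 rho1 = rhs R rho1 -> Bx c rho1 < 0 ->
  circuit_step e x1 x2 /\ circuit_step e x2 x1.
Proof.
move=> cc a0 E P1 P2 r2 t2 p2 r1 t1 n1; split; first exact: (mk_step cc a0 E P2 r2 t2 p2).
apply: (mk_step (circuit_opp cc) a0 _ P1 r1 t1).
  by rewrite E; apply: functional_extensionality => u; rewrite /add_scaled; ring.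
have -> : Bx (fun u => - c u) rho1 = - Bx c rho1.
  have := Bx_scale c (-1) rho1.
  have -> : (fun u => -1 * c u) = (fun u => - c u) by apply: functional_extensionality => u; ring.
  move=> ->; ring.
lra.
Qed.

Lemma cw_cat (x y z : T -> R) l1 l2 :
  circuit_walk e x y l1 -> circuit_walk e y z l2 -> circuit_walk e x z (l1 + l2).
Proof.
elim=> [w|a b c l s _ IH] // W.
by rewrite addSn; apply: cw_cons s (IH W).
Qed.

Lemma cw_one (x y : T -> R) : circuit_step e x y -> circuit_walk e x y 1.
Proof. by move=> s; apply: cw_cons s (cw_nil _ _). Qed.

Definition bw (x y : T -> R) l := circuit_walk e x y l /\ circuit_walk e y x l.

Lemma bw_cat (x y z : T -> R) l1 l2 : bw x y l1 -> bw y z l2 -> bw x z (l1 + l2).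
Proof.
move=> [a b] [c d]; split; first exact: cw_cat a c.
by rewrite addnC; apply: cw_cat d b.
Qed.

Lemma bw_nil (x : T -> R) : bw x x 0.
Proof. by split; apply: cw_nil. Qed.

Lemma bw_eq (x y : T -> R) : x = y -> bw x y 0.
Proof. by move=> ->; apply: bw_nil. Qed.

Lemma bw_sym (x y : T -> R) l : bw x y l -> bw y x l.
Proof. by case. Qed.

Lemma bw_of_bistep (x y : T -> R) : circuit_step e x y /\ circuit_step e y x -> bw x y 1.
Proof. by case=> a b; split; apply: cw_one. Qed.

Lemma inP_mono (z z' : T -> R) : inP e z -> (forall u, 0 <= z' u <= z u) -> inP e z'.
Proof.
move=> Pz H [u|[u w]] /= rr.
  by case/andP: (H u) => h _; rewrite oppr_le0.
have := Pz (inr (u, w)) rr; rewrite /=.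
case/andP: (H u) => _ h1; case/andP: (H w) => _ h2; lra.
Qed.

End Gen.


Section Layers.
Variables (T : finType) (e : rel T).
Hypothesis esym : symmetric e.
Hypothesis eirr : irreflexive e.
Hypothesis conn : forall u w : T, connect e u w.

Fixpoint ball (r : T) (j : nat) : {set T} :=
  if j is j'.+1 then ball r j' :|: [set w | [exists u in ball r j', e u w]] else [set r].

Lemma ball_S r j u : (u \in ball r j.+1) = (u \in ball r j) || [exists w in ball r j, e w u].
Proof. by rewrite /= !inE. Qed.

Lemma ball0 r u : (u \in ball r 0) = (u == r).
Proof. by rewrite /= inE. Qed.

Lemma ball_mono1 r j u : u \in ball r j -> u \in ball r j.+1.
Proof. by rewrite ball_S => ->. Qed.

Lemma ball_mono r i j u : (i <= j)%N -> u \in ball r i -> u \in ball r j.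
Proof.
move=> /subnK <-; elim: (j - i)%N => [|n IH] // H.
by rewrite addSn; apply: ball_mono1; apply: IH.
Qed.

Lemma ball_edge r j u w : u \in ball r j -> e u w -> w \in ball r j.+1.
Proof. by move=> Hu Huw; rewrite ball_S; apply/orP; right; apply/existsP; exists u; rewrite Hu. Qed.

Lemma ball_path r x p j : path e x p -> x \in ball r j -> last x p \in ball r (j + size p).
Proof.
elim: p x j => [|y p IH] x j /=; first by rewrite addn0.
case/andP=> exy pp Hx; rewrite addnS -addSn; apply: IH => //.
exact: ball_edge Hx exy.
Qed.

Lemma ex_ball r u : exists j, u \in ball r j.
Proof.
case/connectP: (conn r u) => p pp ->; exists (0 + size p)%N.
by apply: ball_path => //; rewrite ball0.
Qed.

Definition dist r u := ex_minn (ex_ball r u).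

Lemma dist_ball r u : u \in ball r (dist r u).
Proof. by rewrite /dist; case: ex_minnP. Qed.

Lemma dist_min r u j : u \in ball r j -> (dist r u <= j)%N.
Proof. by rewrite /dist; case: ex_minnP => m _ H /H. Qed.

Lemma in_ball r u j : (u \in ball r j) = (dist r u <= j)%N.
Proof.
apply/idP/idP; first exact: dist_min.
by move=> H; apply: ball_mono H (dist_ball r u).
Qed.

Lemma dist0 r : dist r r = 0%N.
Proof. by apply/eqP; rewrite -leqn0 -in_ball ball0. Qed.

Lemma dist_eq0 r u : dist r u = 0%N -> u = r.
Proof. by move=> H; move: (dist_ball r u); rewrite H ball0 => /eqP. Qed.

Lemma dist_edge r u w : e u w -> (dist r w <= (dist r u).+1)%N.
Proof. by move=> H; rewrite -in_ball; apply: ball_edge (dist_ball r u) H. Qed.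

Lemma dist_pred r u : (0 < dist r u)%N -> exists w, e u w /\ (dist r w).+1 = dist r u.
Proof.
move=> H; move: (dist_ball r u); case E: (dist r u) H => [|j] // _.
rewrite ball_S; case/orP.
  by rewrite in_ball E ltnn.
case/existsP=> w /andP [Hw ewu]; exists w; rewrite esym; split => //.
have h1 : (dist r w <= j)%N by rewrite -in_ball.
have h2 := dist_edge r ewu; rewrite E in h2.
lia.
Qed.

Lemma ball_trans r a b i j : a \in ball r i -> b \in ball a j -> b \in ball r (i + j).
Proof.
move=> Ha; elim: j b => [|j IH] b; first by rewrite ball0 addn0 => /eqP ->.
rewrite ball_S addnS; case/orP => [/IH /ball_mono1 //|].
by case/existsP=> c /andP [Hc ecb]; apply: ball_edge (IH _ Hc) ecb.
Qed.

Lemma ball_sym r u j : u \in ball r j -> r \in ball u j.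
Proof.
elim: j u => [|j IH] u; first by rewrite !ball0 eq_sym.
rewrite ball_S; case/orP => [/IH /ball_mono1 //|].
case/existsP=> c /andP [Hc ecu].
have h : c \in ball u 1 by apply: (ball_edge (j := 0)); [rewrite ball0| rewrite esym].
by rewrite -add1n; apply: ball_trans h (IH _ Hc).
Qed.

Lemma ex_dist1 r : (1 < #|T|)%N -> exists w, dist r w = 1%N.
Proof.
case/card_gt1P => x [y [_ _ xy]].
have [u ur] : exists u, u != r by case: (eqVneq x r) => [xr|]; [exists y; rewrite -xr eq_sym|exists x].
have : (0 < dist r u)%N by rewrite lt0n; apply/eqP => /dist_eq0 /eqP; rewrite (negbTE ur).
case E: (dist r u) => [|n] // _.
elim: n u E {ur} => [|n IH] w Hw; first by exists w.
have [w' [_ Hw']] := @dist_pred r w ltac:(by rewrite Hw).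
by apply: (IH w'); apply/eqP; rewrite -eqSS Hw' Hw.
Qed.

End Layers.


Lemma nl1 j n : (j <= n)%N -> (0 < j)%N -> (n <= j.-1)%N = false.
Proof. move=> *; apply/negbTE; rewrite -ltnNge; lia. Qed.
Lemma nl3 j n : (j <= n)%N -> n <> j -> (n <= j)%N = false.
Proof. move=> *; apply/negbTE; rewrite -ltnNge; lia. Qed.
Lemma nl4 a b m : (b <= a.+1)%N -> (a < m)%N -> (m <= b)%N -> b = m /\ a.+1 = m.
Proof. move=> *; lia. Qed.

Section G.
Variables (R : realType) (T : finType) (e : rel T).
Hypothesis esym : symmetric e.
Hypothesis eirr : irreflexive e.
Hypothesis conn : forall u w : T, connect e u w.
Hypothesis card2 : (1 < #|T|)%N.

Section Root.
Variable r : T.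

Local Notation dd := (dist conn r).

Lemma dd_r : dd r = 0%N. Proof. exact: dist0. Qed.
Lemma dd_eq0 u : dd u = 0%N -> u = r. Proof. exact: dist_eq0. Qed.
Lemma dd_edge u w : e u w -> (dd w <= (dd u).+1)%N. Proof. exact: dist_edge. Qed.
Lemma dd_edge2 u w : e u w -> (dd u <= (dd w).+1)%N /\ (dd w <= (dd u).+1)%N.
Proof. by move=> h; split; apply: dd_edge => //; rewrite esym. Qed.
Lemma dd_pred u : (0 < dd u)%N -> exists w, e u w /\ (dd w).+1 = dd u.
Proof. exact: dist_pred. Qed.
Lemma dd_w1 : exists w, dd w = 1%N. Proof. exact: ex_dist1. Qed.

Lemma dd_neq_r u : u != r -> (0 < dd u)%N.
Proof. by move=> h; rewrite lt0n; apply/eqP => /dd_eq0 /eqP; rewrite (negbTE h). Qed.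

Lemma has_nb u : exists w, e u w.
Proof.
case: (eqVneq u r) => [->|ur].
  have [w1 h1] := dd_w1.
  have [w [ew hw]] := @dd_pred w1 ltac:(by rewrite h1).
  have wr : w = r by apply: dd_eq0; move: hw; rewrite h1 => /eqP; rewrite eqSS => /eqP.
  by exists w1; rewrite esym -wr.
by have [w [ew _]] := dd_pred (dd_neq_r ur); exists w.
Qed.

Lemma inP_ge0 (x : T -> R) u : inP e x -> 0 <= x u.
Proof. by move=> P; have := P (inl u) isT; rewrite /= oppr_le0. Qed.

Lemma inP_le1 (x : T -> R) u : inP e x -> x u <= 1.
Proof.
move=> P; have [w ew] := has_nb u.
have := P (inr (u, w)) ew; have := inP_ge0 w P; rewrite /=; lra.
Qed.

Definition sgn (n : nat) : R := if odd n then -1 else 1.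
Definition circ (eps : R) (S : pred T) : T -> R :=
  fun u => if S u then eps * sgn (dd u) else 0.
Definition good (S : pred T) :=
  S r /\ forall u, S u -> u != r -> exists w, [/\ S w, e u w & (dd w).+1 = dd u].

Lemma notsupp (y c : T -> R) rho : suppB e y \subset suppB e c -> is_row e rho ->
  Bx c rho = 0 -> Bx y rho = 0.
Proof.
move=> sub rr H; apply/eqP; apply: contraT => nz.
have : rho \in suppB e y by rewrite inE rr nz.
by move/(subsetP sub); rewrite inE rr H eqxx.
Qed.

Lemma circ_circuit eps S : eps != 0 -> good S -> circuit e (circ eps S).
Proof.
move=> eps0 [Sr HS]; split.
  by exists r; rewrite /circ Sr dd_r /sgn /= mulr1.
move=> y [u0 yu0] sub.
pose lam := y r / eps.
have Hout : forall u, ~~ S u -> y u = 0.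
  move=> u Su; have := @notsupp y (circ eps S) (inl u) sub isT.
  by rewrite /= /circ (negbTE Su) oppr0 => /(_ erefl) /eqP; rewrite oppr_eq0 => /eqP.
have Hin : forall n u, dd u = n -> S u -> y u = lam * circ eps S u.
  elim=> [|n IH] u hu Su.
    rewrite (dd_eq0 hu) /circ Sr dd_r /sgn /= mulr1 /lam mulfVK //.
  have ur : u != r by apply/eqP => ur; move: hu; rewrite ur dd_r.
  have [w [Sw ew hw]] := HS u Su ur.
  have hw' : dd w = n by apply/eqP; rewrite -eqSS hw hu.
  have H : y u + y w = 0.
    apply: (@notsupp y (circ eps S) (inr (u, w)) sub ew).
    rewrite /= /circ Su Sw hu hw' /sgn /=; case: (odd n) => /=; ring.
  have IHw := IH w hw' Sw.
  have -> : y u = - y w by lra.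
  rewrite IHw /circ Su Sw hu hw' /sgn /=; case: (odd n) => /=; ring.
have Ey : y = (fun u => lam * circ eps S u).
  apply: functional_extensionality => u; case Su: (S u); first exact: Hin.
  by rewrite Hout ?Su // /circ Su mulr0.
have lam0 : lam != 0.
  apply: contraNneq yu0 => l0; rewrite Ey l0 mul0r //.
by rewrite Ey suppB_scale.
Qed.


Definition pat (a : R) (phi : bool) (n : nat) : R := if odd n == phi then a else 0.
Definition st (a : R) (m : nat) (phi : bool) (f : T -> R) : T -> R :=
  fun u => if (dd u < m)%N then pat a phi (dd u) else f u.
Definition low (a : R) (U : pred T) (f : T -> R) : T -> R :=
  fun u => if U u then f u - a else f u.
Definition ballU (m : nat) (U : pred T) : pred T := fun u => (dd u < m)%N || U u.

Lemma good_ballU m (U : pred T) : (0 < m)%N -> (forall u, U u -> dd u = m) -> good (ballU m U).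
Proof.
move=> m0 HU; split; first by rewrite /ballU dd_r m0.
move=> u Su ur; have [w [ew hw]] := dd_pred (dd_neq_r ur).
exists w; split => //; rewrite /ballU.
have : (dd u <= m)%N by case/orP: Su => [/ltnW //|/HU ->].
by move=> H; apply/orP; left; rewrite -hw in H.
Qed.

Lemma low0 a f : low a pred0 f = f.
Proof. by apply: functional_extensionality => u. Qed.

Lemma flip_bw a m phi f (U : pred T) : 0 < a -> (1 < m)%N ->
  (forall u, U u -> dd u = m) -> (forall u, U u -> odd m = phi) ->
  inP e (st a m phi f) -> inP e (st a m (~~phi) (low a U f)) ->
  bw e (st a m phi f) (st a m (~~phi) (low a U f)) 1.
Proof.
move=> a0 m1 HUd HUo P1 P2.
have [w1 h1] := dd_w1.
pose eps : R := if phi then 1 else -1.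
have eps0 : eps != 0 by rewrite /eps; destruct phi; rewrite ?oppr_eq0 oner_eq0.
pose c := circ eps (ballU m U).
have cc : circuit e c by apply: circ_circuit => //; apply: good_ballU => //; apply: ltnW.
have r_m : (dd r < m)%N by rewrite dd_r ltnW.
have w1_m : (dd w1 < m)%N by rewrite h1.
apply: bw_of_bistep.
apply: (@mk_bistep _ _ e _ _ c a (inl (if phi then r else w1)) (inl (if phi then w1 else r))) => //.
- apply: functional_extensionality => u.
  rewrite /st /low /add_scaled /c /circ /ballU /pat /sgn /eps.
  case: (ltnP (dd u) m) => h /=.
    by destruct phi; case: (odd (dd u)) => /=; ring.
  case Uu: (U u); last by rewrite mulr0 addr0.
  move: (HUd u Uu) (HUo u Uu) => -> <-; case: (odd m) => /=; ring.
- by destruct phi => /=; rewrite /st /pat ?w1_m ?r_m ?h1 ?dd_r /= ?oppr0.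
- by destruct phi => /=; rewrite /c /circ /ballU /eps /sgn ?w1_m ?r_m ?h1 ?dd_r /=; lra.
- by destruct phi => /=; rewrite /st /pat ?w1_m ?r_m ?h1 ?dd_r /= ?oppr0.
- by destruct phi => /=; rewrite /c /circ /ballU /eps /sgn ?w1_m ?r_m ?h1 ?dd_r /=; lra.
Qed.

Lemma same_layer u w : e u w -> odd (dd u) = odd (dd w) -> dd u = dd w.
Proof.
move=> ew; have [h1 h2] := dd_edge2 ew.
case: (ltngtP (dd u) (dd w)) => // h.
  have -> : dd w = (dd u).+1 by apply/eqP; rewrite eqn_leq h2 h.
  by rewrite /=; case: (odd (dd u)).
have -> : dd u = (dd w).+1 by apply/eqP; rewrite eqn_leq h1 h.
by rewrite /=; case: (odd (dd w)).
Qed.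

Lemma st_inP a m phi f : 0 <= a -> a <= 1 ->
  (a <= 1/2 \/ forall u w, e u w -> dd u = dd w -> (dd u < m)%N -> odd (dd u) = phi -> False) ->
  (forall u, (m <= dd u)%N -> 0 <= f u) ->
  (forall u w, e u w -> (m <= dd u)%N -> (m <= dd w)%N -> f u + f w <= 1) ->
  (forall u w, e u w -> (dd u).+1 = m -> dd w = m -> pat a phi (dd u) + f w <= 1) ->
  inP e (st a m phi f).
Proof.
move=> a0 a1 hst hf0 hff hb [u|[u w]] /= rr.
  rewrite oppr_le0 /st; case: ltnP => h; last exact: hf0.
  by rewrite /pat; case: eqP.
have [h1 h2] := dd_edge2 rr.
rewrite /st; case: (ltnP (dd u) m) => hu; case: (ltnP (dd w) m) => hw.
- rewrite /pat; case: eqP => eu; case: eqP => ew; try lra.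
  case: hst => [|H]; first lra.
  have duw := same_layer rr (etrans eu (Logic.eq_sym ew)).
  by case: (H u w rr duw hu eu).
- have [Ew Eu] := nl4 h2 hu hw.
  exact: (hb u w rr Eu Ew).
- have [Eu Ew] := nl4 h1 hw hu.
  by rewrite addrC; apply: (hb w u _ Ew Eu); rewrite esym.
- exact: hff.
Qed.

Definition xz (j : nat) (x : T -> R) : T -> R := fun u => if (dd u <= j)%N then 0 else x u.
Definition U1 (a : R) (j : nat) (x : T -> R) : pred T := fun u => (dd u == j) && (a <= x u).
Definition U2 (a : R) (j : nat) (x : T -> R) : pred T := fun u => (dd u == j) && (a *+ 2 <= x u).
Definition hint (a : R) (x : T -> R) := forall u, x u = 0 \/ x u = a \/ x u = a *+ 2.
Definition stab (n : nat) := forall u w, e u w -> dd u = dd w -> (dd u < n)%N -> False.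

Lemma stage_inP a j phi (x g : T -> R) : 0 < a -> a <= 1 -> (a <= 1/2 \/ stab j) -> inP e x ->
  (forall u, (j <= dd u)%N -> 0 <= g u <= x u) ->
  (phi = ~~ odd j -> forall w, dd w = j -> a + g w <= 1) -> (0 < j)%N ->
  inP e (st a j phi g).
Proof.
move=> a0 a1 hst Px hg hB j0; apply: st_inP => //.
- exact: ltW.
- case: hst => h; [by left| right => u w ew duw hu _; exact: h ew duw hu].
- by move=> u /hg /andP [].
- move=> u w ew hu hw; have := Px (inr (u, w)) ew; rewrite /=.
  by case/andP: (hg u hu) => _ h1; case/andP: (hg w hw) => _ h2; lra.
- move=> u w ew hu hw; have oj : odd j = ~~ odd (dd u) by rewrite -hu.
  rewrite /pat; case: eqP => h.
    by apply: hB => //; rewrite -h oj negbK.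
  by rewrite add0r; case/andP: (hg w ltac:(by rewrite hw)) => _ h2; apply: le_trans h2 (inP_le1 _ Px).
Qed.

Lemma stage_bw a j x : 0 < a -> a <= 1 -> (a <= 1/2 \/ stab j) -> inP e x -> hint a x -> (1 < j)%N ->
  bw e (st a j (odd j) (xz j.-1 x)) (st a j.+1 (odd j.+1) (xz j x)) 5.
Proof.
move=> a0 a1 hst Px hx j1.
have j0 : (0 < j)%N by apply: ltnW.
have ha1 : (a <= 0) = false by apply/negbTE; rewrite -ltNge.
have ha2 : (a <= a) = true by rewrite lexx.
have ha3 : (a <= a *+ 2) = true by rewrite mulr2n; lra.
have hb1 : (a *+ 2 <= 0) = false by apply/negbTE; rewrite -ltNge mulr2n; lra.
have hb2 : (a *+ 2 <= a) = false by apply/negbTE; rewrite -ltNge mulr2n; lra.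
have hb3 : (a *+ 2 <= a *+ 2) = true by rewrite lexx.
have he1 : (0 == a *+ 2) = false by apply/negbTE; apply/eqP => h; rewrite mulr2n in h; lra.
have he2 : (a == a *+ 2) = false by apply/negbTE; apply/eqP => h; rewrite mulr2n in h; lra.
have x1 : forall u, x u <= 1 by move=> u; apply: inP_le1.
have x0 : forall u, 0 <= x u by move=> u; apply: inP_ge0.
set f0 := xz j.-1 x.
set f1 := low a (U1 a j x) f0.
set f2 := low a (U2 a j x) f1.
have Ef0 : forall u, (j <= dd u)%N -> f0 u = x u.
  by move=> u h; rewrite /f0 /xz nl1.
have Ef1 : forall u, (j < dd u)%N -> f1 u = x u.
  move=> u h; rewrite /f1 /low /U1 gtn_eqF //.
  by rewrite Ef0 //; apply: ltnW.
have Ef2 : forall u, (j < dd u)%N -> f2 u = x u.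
  by move=> u h; rewrite /f2 /low /U2 gtn_eqF // Ef1.
have Ef1j : forall u, dd u = j -> f1 u = (if x u == a *+ 2 then a else 0).
  move=> u h; rewrite /f1 /low /U1 h eqxx /= Ef0 ?h //.
  case: (hx u) => [->|[->|->]]; rewrite ?ha1 ?ha2 ?ha3 /=.
  - by rewrite he1.
  - by rewrite he2 subrr.
  - by rewrite eqxx mulr2n addrK.
have Ef2j : forall u, dd u = j -> f2 u = 0.
  move=> u h; rewrite /f2 /low /U2 h eqxx /= Ef1j //.
  case: (hx u) => [->|[->|->]]; rewrite ?hb1 ?hb2 ?hb3 /=.
  - by rewrite he1.
  - by rewrite he2.
  - by rewrite eqxx subrr.
have Exz : forall u, (j <= dd u)%N -> xz j x u = (if dd u == j then 0 else x u).
  move=> u h; rewrite /xz; case: eqP => h'; first by rewrite h' leqnn.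
  by rewrite nl3.
have gA : forall g : T -> R, (forall u, dd u = j -> 0 <= g u <= x u) ->
   (forall u, (j < dd u)%N -> g u = x u) -> forall u, (j <= dd u)%N -> 0 <= g u <= x u.
  move=> g h1 h2 u h; case: (ltngtP j (dd u)) h => // h _.
    by rewrite h2 // x0 lexx.
  by apply: h1.
have Bf1 : forall u, dd u = j -> 0 <= f1 u <= x u.
  move=> u h; rewrite Ef1j //; case: (hx u) => [->|[->|->]].
  - by rewrite he1 lexx.
  - by rewrite he2 lexx ltW.
  - by rewrite eqxx ltW //= ha3.
have Bf2 : forall u, dd u = j -> 0 <= f2 u <= x u by move=> u h; rewrite Ef2j // lexx x0.
have Bxz : forall u, dd u = j -> 0 <= xz j x u <= x u.
  by move=> u h; rewrite /xz h leqnn lexx x0.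
have Cf1 : forall w, dd w = j -> a + f1 w <= 1.
  move=> w h; rewrite Ef1j //; case: eqP => h'; last by rewrite addr0.
  by have := x1 w; rewrite h' mulr2n.
have Cf2 : forall w, dd w = j -> a + f2 w <= 1 by move=> w h; rewrite Ef2j // addr0.
have Cxz : forall w, dd w = j -> a + xz j x w <= 1 by move=> w h; rewrite /xz h leqnn addr0.
have P0 : inP e (st a j (odd j) f0).
  apply: (stage_inP (x := x)) => //; last by move=> h; exfalso; move: h; case: (odd j).
  by apply: gA => [u h|u h]; rewrite Ef0 ?x0 ?lexx ?h //; apply: ltnW.
have oj : forall b : bool, b = ~~ b -> False by case.
have P1 : forall phi, inP e (st a j phi f1).
  by move=> phi; apply: (stage_inP (x := x)) => //; try exact: gA Bf1 Ef1; move=> _; apply: Cf1.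
have P2 : forall phi, inP e (st a j phi f2).
  by move=> phi; apply: (stage_inP (x := x)) => //; try exact: gA Bf2 Ef2; move=> _; apply: Cf2.
have P3 : forall phi, inP e (st a j phi (xz j x)).
  have Exz2 : forall u, (j < dd u)%N -> xz j x u = x u by move=> u h; rewrite /xz leqNgt h.
  by move=> phi; apply: (stage_inP (x := x)) => //; try exact: gA Bxz Exz2; move=> _; apply: Cxz.
have s1 := flip_bw (f := f0) (phi := odd j) (U := U1 a j x) a0 j1
  (fun u h => (eqP (andP h).1)) (fun u h => erefl) P0 (P1 _).
have s2 := flip_bw (f := f1) (phi := ~~ odd j) (U := pred0) a0 j1 (fun u (h : false) => False_ind _ (notF h))
  (fun u (h : false) => False_ind _ (notF h)) (P1 _) (P1 (~~ ~~ odd j)).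
rewrite negbK low0 in s2.
have s3 := flip_bw (f := f1) (phi := odd j) (U := U2 a j x) a0 j1
  (fun u h => (eqP (andP h).1)) (fun u h => erefl) (P1 _) (P2 _).
have s4 := flip_bw (f := f2) (phi := ~~ odd j) (U := pred0) a0 j1 (fun u (h : false) => False_ind _ (notF h))
  (fun u (h : false) => False_ind _ (notF h)) (P2 _) (P2 (~~ ~~ odd j)).
rewrite negbK low0 in s4.
have E2 : st a j (odd j) f2 = st a j (odd j) (xz j x).
  apply: functional_extensionality => u; rewrite /st; case: ltnP => // h.
  rewrite Exz //; case: eqP => h'; first by rewrite Ef2j.
  by rewrite Ef2 //; rewrite ltn_neqAle eq_sym h; apply/andP; split => //; apply/eqP.
rewrite E2 in s4.
have s5 := flip_bw (f := xz j x) (phi := odd j) (U := pred0) a0 j1 (fun u (h : false) => False_ind _ (notF h))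
  (fun u (h : false) => False_ind _ (notF h)) (P3 _) (P3 (~~ odd j)).
rewrite low0 in s5.
have E3 : st a j (~~ odd j) (xz j x) = st a j.+1 (odd j.+1) (xz j x).
  apply: functional_extensionality => u; rewrite /st /=.
  case: (ltngtP (dd u) j) => h.
  - by rewrite ltnS (ltnW h).
  - by rewrite ltnNge h.
  - by rewrite h ltnSn /pat /xz h leqnn; case: (odd j).
rewrite E3 in s5.
exact: bw_cat (bw_cat (bw_cat (bw_cat s1 s2) s3) s4) s5.
Qed.

Lemma stab_mono n m : (n <= m)%N -> stab m -> stab n.
Proof. by move=> nm H u w ew duw hu; apply: (H u w ew duw); apply: leq_trans hu nm. Qed.

Lemma stages_bw a x n : 0 < a -> a <= 1 -> (a <= 1/2 \/ stab n.+1) -> inP e x -> hint a x ->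
  bw e (st a 2 false x) (st a n.+2 (odd n.+2) (xz n.+1 x)) (5 * n).
Proof.
move=> a0 a1; elim: n => [|n IH] hst Px hx.
  apply: bw_eq; apply: functional_extensionality => u; rewrite /st /xz /=.
  by case: ltnP => h //; rewrite leqNgt h.
have hst' : a <= 1/2 \/ stab n.+1.
  by case: hst => h; [left|right; apply: stab_mono h].
have S := @stage_bw a n.+2 x a0 a1 hst Px hx isT.
by rewrite mulnS addnC; apply: bw_cat (IH hst' Px hx) S.
Qed.

Lemma zero_inP a m phi : 0 < a -> a <= 1 -> (a <= 1/2 \/ stab m) -> inP e (st a m phi (fun _ => 0)).
Proof.
move=> a0 a1 hst; apply: st_inP => //.
- exact: ltW.
- case: hst => h; [by left| right => u w ew duw hu _; exact: h ew duw hu].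
- by move=> *; rewrite addr0.
- by move=> *; rewrite addr0 /pat; case: eqP => _ //; lra.
Qed.

Lemma wave_bw a n : 0 < a -> a <= 1 -> (a <= 1/2 \/ stab n.+2) ->
  bw e (st a n.+2 (odd n.+2) (fun _ => 0)) (st a 2 false (fun _ => 0)) n.
Proof.
move=> a0 a1; elim: n => [|n IH] hst; first exact: bw_nil.
have hst' : a <= 1/2 \/ stab n.+2.
  by case: hst => h; [left|right; apply: stab_mono h].
have E : st a n.+3 (odd n.+3) (fun _ => 0) = st a n.+2 (odd n.+3) (fun _ => 0).
  apply: functional_extensionality => u; rewrite /st.
  case: (ltngtP (dd u) n.+2) => h.
  - by rewrite ltnS (ltnW h).
  - by rewrite ltnNge h.
  - by rewrite h ltnSn /pat /=; case: (odd n).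
have F := @flip_bw a n.+2 (odd n.+3) (fun _ => 0) pred0 a0 isT
  (fun u (h : false) => False_ind _ (notF h)) (fun u (h : false) => False_ind _ (notF h))
  (zero_inP _ a0 a1 hst') (zero_inP _ a0 a1 hst').
rewrite low0 (_ : ~~ odd n.+3 = odd n.+2) in F; last by rewrite /= negbK.
by rewrite E -add1n; apply: bw_cat F (IH hst').
Qed.

Lemma T_bw a x K : (forall u, (dd u <= K)%N) -> 0 < a -> a <= 1 -> (a <= 1/2 \/ stab K.+2) ->
  inP e x -> hint a x ->
  bw e (st a 2 false x) (st a 2 false (fun _ => 0)) (5 * K + K).
Proof.
move=> dK a0 a1 hst Px hx.
have hst' : a <= 1/2 \/ stab K.+1.
  by case: hst => h; [left|right; apply: stab_mono h].
have S := stages_bw a0 a1 hst' Px hx.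
have E : xz K.+1 x = (fun _ => 0).
  by apply: functional_extensionality => u; rewrite /xz (leq_trans (dK u)).
rewrite E in S; exact: bw_cat S (wave_bw a0 a1 hst).
Qed.

Lemma inP_upd (z : T -> R) u b : inP e z -> 0 <= b -> (forall w, e u w -> b + z w <= 1) ->
  inP e (fun t => if t == u then b else z t).
Proof.
move=> Pz b0 H [t|[t w]] /= rr.
  by case: eqP => _; [rewrite oppr_le0 | exact: (Pz (inl t))].
case: eqP => [tu|tu]; case: eqP => [wu|wu].
- by move: rr; rewrite tu wu eirr.
- by apply: H; rewrite -tu.
- by rewrite addrC; apply: H; rewrite -wu esym.
- exact: (Pz (inr (t, w))).
Qed.

Lemma inP_zero : inP e (fun _ : T => (0 : R)).
Proof. by move=> [u|[u w]] /= _; rewrite ?oppr0 ?addr0. Qed.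

Lemma d1_adj u : dd u = 1%N -> e u r.
Proof.
move=> h; have [w [ew hw]] := @dd_pred u ltac:(by rewrite h).
have wr : w = r by apply: dd_eq0; move: hw; rewrite h => /eqP; rewrite eqSS => /eqP.
by rewrite -wr.
Qed.

Lemma st_d0 a f t : dd t = 0%N -> st a 2 false f t = a.
Proof. by move=> h; rewrite /st h. Qed.
Lemma st_d1 a f t : dd t = 1%N -> st a 2 false f t = 0.
Proof. by move=> h; rewrite /st h. Qed.
Lemma st_d2 a f t : (2 <= dd t)%N -> st a 2 false f t = f t.
Proof. by move=> h; rewrite /st ltnNge h. Qed.

Lemma dd_cases t : [\/ dd t = 0%N, dd t = 1%N | (2 <= dd t)%N].
Proof. by case: (dd t) => [|[|n]]; [apply: Or31|apply: Or32|apply: Or33]. Qed.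

Lemma good_r1 (P : pred T) : good (fun t => (t == r) || ((dd t == 1%N) && P t)).
Proof.
split; first by rewrite eqxx.
move=> u /orP [/eqP -> /eqP //|/andP [/eqP h _] _].
by exists r; rewrite eqxx dd_r h d1_adj.
Qed.

Lemma sgn0 : sgn 0 = 1. Proof. by []. Qed.
Lemma sgn1 : sgn 1 = -1. Proof. by []. Qed.

Lemma R_bw z : inP e z -> hint (1/2) z -> z r = 1/2 ->
  exists l, (l <= 2)%N /\ bw e z (st (1/2) 2 false z) l.
Proof.
move=> Pz hz zr.
have z0 : forall u, 0 <= z u by move=> u; apply: inP_ge0.
have hD1 : forall u, dd u = 1%N -> z u = 0 \/ z u = 1/2.
  move=> u hu; have := Pz (inr (u, r)) (d1_adj hu); rewrite /= zr.
  by case: (hz u) => [->|[->|->]]; [left|right|rewrite mulr2n => h; lra].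
case: (pickP (fun u => (dd u == 1%N) && (z u == 1/2))) => [w /andP [/eqP hw /eqP zw]|none]; last first.
  exists 0%N; split => //; apply: bw_eq; apply: functional_extensionality => t.
  case: (dd_cases t) => h.
  - by rewrite st_d0 // (dd_eq0 h).
  - rewrite st_d1 //; have := none t; rewrite h eqxx /=.
    by case: (hD1 t h) => ->; rewrite ?eqxx.
  - by rewrite st_d2.
exists 2%N; split => //.
have wr : w != r by apply/eqP => wr; move: hw; rewrite wr dd_r.
have ewr : e r w by rewrite esym d1_adj.
pose z1 := fun t : T => if t == r then 0 else z t.
have Pz1 : inP e z1.
  by apply: (inP_mono Pz) => t; rewrite /z1; case: eqP => _; rewrite ?lexx ?z0.
have Pz2 : inP e (st (1/2) 2 false z).
  apply: (inP_mono Pz) => t; case: (dd_cases t) => h.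
  - by rewrite st_d0 // (dd_eq0 h) zr; lra.
  - by rewrite st_d1 // lexx z0.
  - by rewrite st_d2 // lexx z0.
have s1 : bw e z z1 1.
  apply: bw_of_bistep.
  apply: (@mk_bistep _ _ e _ _ (circ (-1) (pred1 r)) (1/2) (inr (r, w)) (inl r)) => //.
  - apply: circ_circuit; first by rewrite oppr_eq0 oner_eq0.
    by split; [rewrite /= eqxx|move=> u /eqP ->; rewrite eqxx].
  - lra.
  - apply: functional_extensionality => t; rewrite /z1 /add_scaled /circ /=.
    by case: eqP => [->|_]; [rewrite dd_r sgn0 zr; lra|rewrite mulr0 addr0].
  - by rewrite /z1 /= eqxx oppr0.
  - by rewrite /= /circ /= eqxx dd_r sgn0; lra.
  - by rewrite /= zr zw; lra.
  - by rewrite /= /circ /= eqxx (negbTE wr) dd_r sgn0; lra.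
have s2 : bw e z1 (st (1/2) 2 false z) 1.
  apply: bw_of_bistep.
  apply: (@mk_bistep _ _ e _ _ (circ 1 (fun t => (t == r) || ((dd t == 1%N) && (z t == 1/2))))
     (1/2) (inl r) (inl w)) => //.
  - by apply: circ_circuit; [rewrite oner_eq0|apply: good_r1].
  - lra.
  - apply: functional_extensionality => t; rewrite /z1 /add_scaled /circ.
    case: (dd_cases t) => h.
    + rewrite (dd_eq0 h) st_d0; last exact: dd_r.
      by rewrite eqxx /= dd_r sgn0; lra.
    + have tr : (t == r) = false by apply/eqP => tr; move: h; rewrite tr dd_r.
      rewrite st_d1 // tr h eqxx /= sgn1.
      by case: (hD1 t h) => ->; rewrite ?eqxx; [rewrite (_ : (0 == 1/2) = false); [lra|apply/eqP; lra]|lra].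
    + have tr : (t == r) = false by apply/eqP => tr; move: h; rewrite tr dd_r.
      rewrite st_d2 // tr (_ : (dd t == 1%N) = false) /=; last by apply/eqP => h'; move: h; rewrite h'.
      by rewrite mulr0 addr0.
  - by rewrite /= st_d1 // oppr0.
  - by rewrite /= /circ hw eqxx zw eqxx orbT sgn1; lra.
  - by rewrite /z1 /= eqxx oppr0.
  - by rewrite /= /circ /= eqxx /= dd_r sgn0; lra.
exact: bw_cat s1 s2.
Qed.

Lemma d1_ne_r t : dd t = 1%N -> (t == r) = false.
Proof. by move=> h; apply/eqP => tr; move: h; rewrite tr dd_r. Qed.
Lemma d2_ne_r t : (2 <= dd t)%N -> (t == r) = false.
Proof. by move=> h; apply/eqP => tr; move: h; rewrite tr dd_r. Qed.
Lemma d2_ne1 t : (2 <= dd t)%N -> (dd t == 1%N) = false.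
Proof. by move=> h; apply/eqP => h'; move: h; rewrite h'. Qed.

Lemma nb_of_root1 (y : T -> R) t : inP e y -> y r = 1 -> dd t = 1%N -> y t = 0.
Proof.
move=> Py yr h; have := Py (inr (t, r)) (d1_adj h); have := inP_ge0 t Py.
by rewrite /= yr => *; lra.
Qed.

Lemma Rfwd y : inP e y -> hint (1/2) y ->
  exists l, (l <= 3)%N /\ circuit_walk e (st (1/2) 2 false y) y l.
Proof.
move=> Py hy.
have y0 : forall u, 0 <= y u by move=> u; apply: inP_ge0.
have hy' : forall u, y u = 0 \/ y u = 1/2 \/ y u = 1.
  by move=> u; case: (hy u) => [->|[->|->]]; [left|right;left|right;right; rewrite mulr2n; lra].
have [w1 h1] := dd_w1.
have w1r : w1 != r by rewrite d1_ne_r.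
have ew1 : e r w1 by rewrite esym d1_adj.
set Z := st (1/2) 2 false y.
case: (hy' r) => [yr|[yr|yr]].
- pose U1 := fun t : T => (dd t == 1%N) && (1/2 <= y t).
  pose z1 := fun t : T => if t == r then 0 else if U1 t then 1/2 else Z t.
  have Pz1 : inP e z1.
    apply: (inP_mono Py) => t; rewrite /z1.
    case: eqP => [->|tr]; first by rewrite yr lexx.
    case: ifP => [/andP [_ ->]|_]; first by rewrite andbT; lra.
    case: (dd_cases t) => h; first by case: tr; apply: dd_eq0.
      by rewrite /Z st_d1 // lexx y0.
    by rewrite /Z st_d2 // lexx y0.
  have s1 : circuit_step e Z z1.
    apply: (@mk_step _ _ e _ _ (circ (-1) (fun t => (t == r) || U1 t)) (1/2) (inl r)) => //.
    + by apply: circ_circuit; [rewrite oppr_eq0 oner_eq0|apply: good_r1].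
    + lra.
    + apply: functional_extensionality => t; rewrite /z1 /add_scaled /circ /Z.
      case: (dd_cases t) => h.
      * rewrite (dd_eq0 h) st_d0; last exact: dd_r.
        by rewrite eqxx /= dd_r sgn0; lra.
      * rewrite st_d1 // d1_ne_r //= h sgn1.
        by case: ifP => _; lra.
      * by rewrite st_d2 // d2_ne_r //= /U1 d2_ne1 //= mulr0 addr0.
    + by rewrite /= /z1 eqxx oppr0.
    + by rewrite /= /circ eqxx /= dd_r sgn0; lra.
  case: (pickP (fun t => (dd t == 1%N) && (y t == 1))) => [w /andP [/eqP hw /eqP yw]|none].
  + pose z2 := fun t : T => if t == r then 1/2 else z1 t.
    have wr : (w == r) = false by rewrite d1_ne_r.
    have U1w : U1 w by rewrite /U1 hw eqxx yw /=; lra.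
    have s2 : circuit_step e z1 z2.
      apply: (@mk_step _ _ e _ _ (circ 1 (pred1 r)) (1/2) (inr (r, w))) => //.
      * apply: circ_circuit; first by rewrite oner_eq0.
        by split; [rewrite /= eqxx|move=> u /eqP ->; rewrite eqxx].
      * lra.
      * apply: functional_extensionality => t; rewrite /z2 /add_scaled /circ /=.
        case: eqP => [->|_]; first by rewrite /z1 eqxx dd_r sgn0; lra.
        by rewrite mulr0 addr0.
      * apply: inP_upd => //; first lra.
        move=> t ert; rewrite /z1.
        have tr : (t == r) = false by apply/eqP => tr; move: ert; rewrite tr eirr.
        have ht : dd t = 1%N.
          have := dd_edge ert; rewrite dd_r; case E: (dd t) => [|[|n]] //.
          by move: tr; rewrite (dd_eq0 E) eqxx.
        rewrite tr; case: ifP => _; first lra.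
        by rewrite /Z st_d1 //; lra.
      * by rewrite /= esym d1_adj.
      * by rewrite /= /z2 eqxx wr /z1 wr U1w; lra.
      * by rewrite /= /circ /= eqxx wr dd_r sgn0; lra.
    have s3 : circuit_step e z2 y.
      apply: (@mk_step _ _ e _ _ (circ (-1) (fun t => (t == r) || ((dd t == 1%N) && (y t == 1)))) (1/2) (inl r)) => //.
      * by apply: circ_circuit; [rewrite oppr_eq0 oner_eq0|apply: good_r1].
      * lra.
      * apply: functional_extensionality => t; rewrite /z2 /z1 /add_scaled /circ /Z.
        case: (dd_cases t) => h.
        -- rewrite (dd_eq0 h) eqxx /= dd_r sgn0 yr; lra.
        -- rewrite d1_ne_r //= /U1 h eqxx /= st_d1 // sgn1.
           case: (hy' t) => [->|[->|->]].
           ++ rewrite ifF; last by apply/negbTE; rewrite -ltNge; lra.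
              by rewrite ifF ?mulr0 ?addr0 //; apply/negbTE/eqP; lra.
           ++ rewrite ifT; last by apply/idP; lra.
              by rewrite ifF ?mulr0 ?addr0 //; apply/negbTE/eqP; lra.
           ++ rewrite ifT; last by apply/idP; lra.
              by rewrite eqxx; lra.
        -- by rewrite d2_ne_r //= /U1 d2_ne1 //= st_d2 // mulr0 addr0.
      * by rewrite /= yr oppr0.
      * by rewrite /= /circ eqxx /= dd_r sgn0; lra.
    by exists 3%N; split => //; apply: cw_cons s1 (cw_cons s2 (cw_one s3)).
  + have E : z1 = y.
      apply: functional_extensionality => t; rewrite /z1 /U1 /Z.
      case: (dd_cases t) => h.
      * by rewrite (dd_eq0 h) eqxx yr.
      * rewrite d1_ne_r // h eqxx /= st_d1 //.
        have := none t; rewrite h eqxx /=.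
        case: (hy' t) => [->|[->|->]] H.
        -- by rewrite ifF //; apply/negbTE; rewrite -ltNge; lra.
        -- by rewrite ifT //; lra.
        -- by rewrite eqxx in H.
      * by rewrite d2_ne_r // d2_ne1 //= st_d2.
    by exists 1%N; split => //; rewrite -E; apply: cw_one.
- have [l [hl [_ W]]] := R_bw Py hy yr.
  by exists l; split => //; apply: leq_trans hl _.
- exists 1%N; split => //; apply: cw_one.
  apply: (@mk_step _ _ e _ _ (circ 1 (pred1 r)) (1/2) (inr (r, w1))) => //.
  + apply: circ_circuit; first by rewrite oner_eq0.
    by split; [rewrite /= eqxx|move=> u /eqP ->; rewrite eqxx].
  + lra.
  + apply: functional_extensionality => t; rewrite /Z /add_scaled /circ /=.
    case: (dd_cases t) => h.
    * rewrite (dd_eq0 h) st_d0; last exact: dd_r.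
      by rewrite eqxx dd_r sgn0 yr; lra.
    * by rewrite st_d1 // d1_ne_r // (nb_of_root1 Py yr h) mulr0 addr0.
    * by rewrite st_d2 // d2_ne_r // mulr0 addr0.
  + by rewrite /= yr (nb_of_root1 Py yr h1) addr0.
  + by rewrite /= /circ /= eqxx (negbTE w1r) dd_r sgn0; lra.
Qed.

Lemma int_hint (x : T -> R) : (forall u, x u = 0 \/ x u = 1) -> hint 1 x.
Proof. by move=> h u; case: (h u) => ->; [left|right; left]. Qed.

Lemma st1_eq_root1 (x : T -> R) : inP e x -> x r = 1 -> st 1 2 false x = x.
Proof.
move=> Px xr; apply: functional_extensionality => t.
case: (dd_cases t) => h.
- by rewrite st_d0 // (dd_eq0 h) xr.
- by rewrite st_d1 // (nb_of_root1 Px xr h).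
- by rewrite st_d2.
Qed.

Lemma Groot x : inP e x -> (forall u, x u = 0 \/ x u = 1) ->
  exists l, (l <= 1)%N /\ circuit_walk e x (st 1 2 false x) l.
Proof.
move=> Px hx.
case: (hx r) => xr; last by exists 0%N; split => //; rewrite st1_eq_root1 //; apply: cw_nil.
exists 1%N; split => //; apply: cw_one.
have [w1 h1] := dd_w1.
have w1r : (w1 == r) = false by rewrite d1_ne_r.
pose S := fun t : T => (t == r) || ((dd t == 1%N) && (x t == 1)).
pose rho := if x w1 == 1 then inl w1 else inr (r, w1).
apply: (@mk_step _ _ e _ _ (circ 1 S) 1 rho) => //.
- by apply: circ_circuit; [rewrite oner_eq0|apply: good_r1].
- apply: functional_extensionality => t; rewrite /add_scaled /circ /S.
  case: (dd_cases t) => h.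
  + rewrite (dd_eq0 h) st_d0; last exact: dd_r.
    by rewrite eqxx /= dd_r sgn0 xr; lra.
  + rewrite st_d1 // d1_ne_r // h eqxx /= sgn1.
    by case: (hx t) => ->; rewrite ?eqxx; [rewrite ifF; [lra|apply/negbTE/eqP; lra]|lra].
  + by rewrite st_d2 // d2_ne_r // d2_ne1 //= mulr0 addr0.
- apply: st_inP => //.
  + right => u w ew duw hu ho.
    have u0 : dd u = 0%N by move: hu ho; case: (dd u) => [|[|n]].
    have w0 : dd w = 0%N by rewrite -duw.
    by move: ew; rewrite (dd_eq0 u0) (dd_eq0 w0) eirr.
  + by move=> u _; apply: inP_ge0.
  + by move=> u w ew _ _; apply: (Px (inr (u, w))).
  + move=> u w ew hu _; have -> : dd u = 1%N by case: hu.
    by rewrite /pat /= add0r; apply: inP_le1.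
- by rewrite /rho; case: ifP => _ //=; rewrite esym d1_adj.
- rewrite /rho; case: ifP => h.
  + by rewrite /= st_d1 // oppr0.
  + by rewrite /= st_d0 ?dd_r // st_d1 // addr0.
- rewrite /rho /circ /S; case: ifP => h /=.
  + by rewrite w1r h1 h eqxx /= sgn1; lra.
  + by rewrite eqxx w1r h1 h /= dd_r sgn0; lra.
Qed.

Lemma Gfin y : inP e y -> (forall u, y u = 0 \/ y u = 1) ->
  exists l, (l <= 1)%N /\ circuit_walk e (st 1 2 false y) y l.
Proof.
move=> Py hy.
case: (hy r) => yr; last by exists 0%N; split => //; rewrite st1_eq_root1 //; apply: cw_nil.
exists 1%N; split => //; apply: cw_one.
pose S := fun t : T => (t == r) || ((dd t == 1%N) && (y t == 1)).
apply: (@mk_step _ _ e _ _ (circ (-1) S) 1 (inl r)) => //.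
- by apply: circ_circuit; [rewrite oppr_eq0 oner_eq0|apply: good_r1].
- apply: functional_extensionality => t; rewrite /add_scaled /circ /S.
  case: (dd_cases t) => h.
  + rewrite (dd_eq0 h) st_d0; last exact: dd_r.
    by rewrite eqxx /= dd_r sgn0 yr; lra.
  + rewrite st_d1 // d1_ne_r // h eqxx /= sgn1.
    by case: (hy t) => ->; rewrite ?eqxx; [rewrite ifF; [lra|apply/negbTE/eqP; lra]|lra].
  + by rewrite st_d2 // d2_ne_r // d2_ne1 //= mulr0 addr0.
- by rewrite /= yr oppr0.
- by rewrite /= /circ /S eqxx /= dd_r sgn0; lra.
Qed.

Definition Sw (m : nat) (x : T -> R) : T -> R :=
  fun u => if (dd u < m)%N then 1/2 else if dd u == m then x u / 2 else x u.

Lemma Sw_inP m x : inP e x -> inP e (Sw m x).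
Proof.
move=> Px.
have x0 : forall u, 0 <= x u by move=> u; apply: inP_ge0.
have x1 : forall u, x u <= 1 by move=> u; apply: inP_le1.
move=> [u|[u w]] /= rr.
  rewrite oppr_le0 /Sw; case: ifP => _; first lra.
  by case: ifP => _; [have := x0 u; lra|apply: x0].
have [h1 h2] := dd_edge2 rr.
have := Px (inr (u, w)) rr; rewrite /= /Sw => hx.
have := x0 u; have := x0 w; have := x1 u; have := x1 w.
case: (ltngtP (dd u) m) => hu; case: (ltngtP (dd w) m) => hw; move=> *; try lra.
- by exfalso; move: h2 hu hw; clear; lia.
- by exfalso; move: h1 hu hw; clear; lia.
Qed.

Lemma Sw_hint m x : (0 < m)%N -> inP e x -> (forall u, x u = 0 \/ x u = 1) -> hint (1/2) (Sw m x).
Proof.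
move=> m0 Px hx u; rewrite /Sw; case: ifP => _; first by right; left.
case: ifP => _; case: (hx u) => ->.
- by left; lra.
- by right; left; lra.
- by left.
- by right; right; rewrite mulr2n; lra.
Qed.

Lemma Sw_r m x : (0 < m)%N -> Sw m x r = 1/2.
Proof. by move=> m0; rewrite /Sw dd_r m0. Qed.

Lemma switch_step x n u0 w0 : inP e x -> (forall u, x u = 0 \/ x u = 1) ->
  e u0 w0 -> dd u0 = n.+1 -> dd w0 = n.+1 ->
  circuit_step e (st 1 n.+2 (odd n.+2) (xz n.+1 x)) (Sw n.+2 x).
Proof.
move=> Px hx ew hu hw.
pose U := fun t : T => (dd t == n.+2) && (x t == 1).
pose eps : R := if odd n.+2 then 1 else -1.
apply: (@mk_step _ _ e _ _ (circ eps (ballU n.+2 U)) (1/2) (inr (u0, w0))) => //.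
- apply: circ_circuit; first by rewrite /eps; case: ifP => _; rewrite ?oppr_eq0 oner_eq0.
  by apply: good_ballU => // t /andP [/eqP].
- lra.
- apply: functional_extensionality => t.
  rewrite /Sw /st /add_scaled /circ /ballU /pat /sgn /eps /U /xz.
  case: (ltnP (dd t) n.+2) => h /=.
    by case: (odd n); case: (odd (dd t)) => /=; lra.
  case: eqP => h'.
    rewrite h' ifF /=; last by apply/negbTE; rewrite -ltnNge.
    by case: (hx t) => ->; rewrite ?eqxx /=; [rewrite ifF; [lra|apply/negbTE/eqP; lra]|case: (odd n) => /=; lra].
  rewrite ifF /=; last by apply/negbTE; rewrite -ltnNge (leq_trans _ h).
  by rewrite mulr0 addr0.
- exact: Sw_inP.
- by rewrite /= /Sw hu hw ltnSn; lra.
- rewrite /= /circ /ballU hu hw ltnSn /= /eps /sgn /=.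
  by case: (odd n) => /=; lra.
Qed.

Definition nb := [exists u, [exists w, e u w && (dd u == dd w)]].
Definition hub : T -> R := if nb then st (1/2) 2 false (fun _ => 0) else st 1 2 false (fun _ => 0).

Lemma hub_zero : circuit_step e hub (fun _ => 0).
Proof.
pose a : R := if nb then 1/2 else 1.
have a0 : 0 < a by rewrite /a; case: ifP => _; lra.
have E : hub = st a 2 false (fun _ => 0) by rewrite /hub /a; case: ifP.
rewrite E.
apply: (@mk_step _ _ e _ _ (circ (-1) (pred1 r)) a (inl r)) => //.
- apply: circ_circuit; first by rewrite oppr_eq0 oner_eq0.
  by split; [rewrite /= eqxx|move=> u /eqP ->; rewrite eqxx].
- apply: functional_extensionality => t; rewrite /add_scaled /circ /=.
  case: (dd_cases t) => h.
  + by rewrite (dd_eq0 h) eqxx st_d0 ?dd_r // sgn0; lra.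
  + by rewrite st_d1 // d1_ne_r // mulr0 addr0.
  + by rewrite st_d2 // d2_ne_r // mulr0 addr0.
- exact: inP_zero.
- by rewrite /= oppr0.
- by rewrite /= /circ /= eqxx dd_r sgn0; lra.
Qed.

Lemma nb_stab : ~~ nb -> forall n, stab n.
Proof.
move=> h n u w ew duw _; move: h; apply/negP; rewrite negbK.
by apply/existsP; exists u; apply/existsP; exists w; rewrite ew duw eqxx.
Qed.

Lemma half_hint (y : T -> R) : (forall u, y u = 0 \/ y u = 1/2 \/ y u = 1) -> hint (1/2) y.
Proof.
by move=> h u; case: (h u) => [->|[->|->]]; [left|right; left|right; right; rewrite mulr2n; lra].
Qed.

Lemma hub_int x K : (forall u, (dd u <= K)%N) -> inP e x -> (forall u, x u = 0 \/ x u = 1) ->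
  exists l, (l <= 11 * K + 4)%N /\ circuit_walk e x hub l.
Proof.
move=> dK Px hx.
have [l0 [hl0 W0]] := Groot Px hx.
have a0 : (0 : R) < 1 by lra.
have a1 : (1 : R) <= 1 by lra.
rewrite /hub; case nbP: nb.
- have exP : exists j, [exists u, [exists w, [&& e u w, dd u == j & dd w == j]]].
    move/existsP: nbP => [u /existsP [w /andP [ew /eqP duw]]].
    by exists (dd u); apply/existsP; exists u; apply/existsP; exists w; rewrite ew eqxx duw eqxx.
  case: (ex_minnP exP) => j0 /existsP [u0 /existsP [w0 /and3P [ew0 /eqP hu0 /eqP hw0]]] jmin.
  have j0p : (0 < j0)%N.
    rewrite lt0n; apply/eqP => j00; move: ew0.
    by rewrite (dd_eq0 (u := u0)) ?hu0 // (dd_eq0 (u := w0)) ?hw0 // eirr.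
  have stj : stab j0.
    move=> u w ew duw hu.
    suff: (j0 <= dd u)%N by rewrite leqNgt hu.
    apply: jmin.
    by apply/existsP; exists u; apply/existsP; exists w; rewrite ew eqxx -duw eqxx.
  have j0K : (j0 <= K)%N by rewrite -hu0.
  move: hu0 hw0 stj j0K; case: j0 j0p {jmin} => // n _ hu0 hw0 stj j0K.
  have S := @stages_bw 1 x n a0 a1 (or_intror stj) Px (int_hint hx).
  have SW := switch_step Px hx ew0 hu0 hw0.
  have P2 : (0 < n.+2)%N by [].
  have [l1 [hl1 B1]] := R_bw (Sw_inP n.+2 Px) (Sw_hint P2 Px hx) (Sw_r x P2).
  have hh : (0 : R) < 1/2 by lra.
  have hh1 : (1/2 : R) <= 1 by lra.
  have B2 := @T_bw (1/2) (Sw n.+2 x) K dK hh hh1 (or_introl (lexx _)) (Sw_inP n.+2 Px) (Sw_hint P2 Px hx).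
  exists (l0 + (5 * n + (1 + (l1 + (5 * K + K)))))%N; split.
    by move: hl0 hl1 j0K; clear; lia.
  apply: cw_cat W0 (cw_cat S.1 (cw_cons SW (cw_cat B1.1 B2.1))).
- have stK : stab K.+2 by apply: nb_stab; rewrite nbP.
  have B := @T_bw 1 x K dK a0 a1 (or_intror stK) Px (int_hint hx).
  exists (l0 + (5 * K + K))%N; split; first by move: hl0; clear; lia.
  exact: cw_cat W0 B.1.
Qed.

Lemma hub_y y K : (forall u, (dd u <= K)%N) -> inP e y -> (forall u, y u = 0 \/ y u = 1/2 \/ y u = 1) ->
  (~~ nb -> forall u, y u = 0 \/ y u = 1) ->
  exists l, (l <= 6 * K + 3)%N /\ circuit_walk e hub y l.
Proof.
move=> dK Py hy hint01.
rewrite /hub; case nbP: nb.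
- have hh : (0 : R) < 1/2 by lra.
  have hh1 : (1/2 : R) <= 1 by lra.
  have B := @T_bw (1/2) y K dK hh hh1 (or_introl (lexx _)) Py (half_hint hy).
  have [l1 [hl1 W1]] := Rfwd Py (half_hint hy).
  exists (5 * K + K + l1)%N; split; first by move: hl1; clear; lia.
  exact: cw_cat B.2 W1.
- have a0 : (0 : R) < 1 by lra.
  have a1 : (1 : R) <= 1 by lra.
  have hy1 := hint01 (negbT nbP).
  have stK : stab K.+2 by apply: nb_stab; rewrite nbP.
  have B := @T_bw 1 y K dK a0 a1 (or_intror stK) Py (int_hint hy1).
  have [l1 [hl1 W1]] := Gfin Py hy1.
  exists (5 * K + K + l1)%N; split; first by move: hl1; clear; lia.
  exact: cw_cat B.2 W1.
Qed.

Lemma half_to_zero (x : T -> R) K : (forall u, (dd u <= K)%N) -> inP e x ->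
  (forall u, x u = 0 \/ x u = 1/2 \/ x u = 1) -> x r = 1/2 ->
  exists l, (l <= 6 * K + 3)%N /\ circuit_walk e x (fun _ => 0) l.
Proof.
move=> dK Px hx xr.
have hh : (0 : R) < 1/2 by lra.
have hh1 : (1/2 : R) <= 1 by lra.
have [l1 [hl1 B1]] := R_bw Px (half_hint hx) xr.
have B := @T_bw (1/2) x K dK hh hh1 (or_introl (lexx _)) Px (half_hint hx).
have Z : circuit_step e (st (1/2) 2 false (fun _ => 0)) (fun _ => 0).
  have := hub_zero; rewrite /hub; case: ifP => // nbP.
  move=> _.
  apply: (@mk_step _ _ e _ _ (circ (-1) (pred1 r)) (1/2) (inl r)) => //.
  - apply: circ_circuit; first by rewrite oppr_eq0 oner_eq0.
    by split; [rewrite /= eqxx|move=> u /eqP ->; rewrite eqxx].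
  - apply: functional_extensionality => t; rewrite /add_scaled /circ /=.
    case: (dd_cases t) => h.
    + by rewrite (dd_eq0 h) eqxx st_d0 ?dd_r // sgn0; lra.
    + by rewrite st_d1 // d1_ne_r // mulr0 addr0.
    + by rewrite st_d2 // d2_ne_r // mulr0 addr0.
  - exact: inP_zero.
  - by rewrite /= oppr0.
  - by rewrite /= /circ /= eqxx dd_r sgn0; lra.
exists (l1 + (5 * K + K + 1))%N; split; first by move: hl1; clear; lia.
exact: cw_cat B1.1 (cw_cat B.1 (cw_one Z)).
Qed.

Definition fmin (s : seq T) (f : T -> R) : R := foldr (fun t acc => Num.min (f t) acc) 1 s.

Lemma fmin_prop s f : (forall t, 0 < f t) ->
  [/\ 0 < fmin s f, fmin s f <= 1 & forall t, t \in s -> fmin s f <= f t].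
Proof.
move=> fp; elim: s => [|t s [IH1 IH2 IH3]] /=; first by split => //; lra.
split.
- by rewrite lt_min fp IH1.
- by rewrite ge_min IH2 orbT.
- move=> t'; rewrite inE => /orP [/eqP ->|h]; first by rewrite ge_min lexx.
  by rewrite ge_min (IH3 _ h) orbT.
Qed.

Lemma vertex_half (y z1 z2 : T -> R) : vertex e y -> inP e z1 -> inP e z2 ->
  (forall u, y u = 1/2 * z1 u + 1/2 * z2 u) -> z1 = z2.
Proof.
move=> [_ V] P1 P2 E; apply: (V z1 z2 (1/2) P1 P2); [lra|lra|].
by apply: functional_extensionality => u; rewrite E; lra.
Qed.

Lemma HI (y : T -> R) : vertex e y -> forall u, y u = 0 \/ y u = 1/2 \/ y u = 1.
Proof.
move=> vy; have Py := vy.1.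
have y0 : forall u, 0 <= y u by move=> u; apply: inP_ge0.
have y1 : forall u, y u <= 1 by move=> u; apply: inP_le1.
pose g := fun t => if (0 < y t) && (y t < 1/2) then 1 else if (1/2 < y t) && (y t < 1) then -1 else 0 : R.
pose m := fun t => if (0 < y t) && (y t < 1/2) then Num.min (y t) (1/2 - y t)
  else if (1/2 < y t) && (y t < 1) then Num.min (y t - 1/2) (1 - y t) else 1.
have mpos : forall t, 0 < m t.
  move=> t; rewrite /m; case: ifP => [/andP [h1 h2]|_]; first by rewrite lt_min; apply/andP; split; lra.
  by case: ifP => [/andP [h1 h2]|_]; [rewrite lt_min; apply/andP; split; lra|lra].
have [d0 d1 dm'] := fmin_prop (enum T) mpos.
set d := fmin (enum T) m in d0 d1 dm'.
have dm : forall t, d <= m t by move=> t; apply: dm'; rewrite mem_enum.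
have F : forall t,
  [\/ [/\ g t = 1, d <= y t & y t + d <= 1/2], [/\ g t = -1, 1/2 + d <= y t & y t + d <= 1]
      | g t = 0 /\ (y t = 0 \/ y t = 1/2 \/ y t = 1)].
  move=> t; have := dm t; rewrite /g /m.
  case: ifP => [/andP [h1 h2]|h1].
    by rewrite le_min => /andP [a b]; apply: Or31; split => //; lra.
  case: ifP => [/andP [h3 h4]|h3].
    by rewrite le_min => /andP [a b]; apply: Or32; split => //; lra.
  move=> _; case: (ltrgtP (y t) (1/2)) => h.
  - rewrite h andbT in h1; move/negbT: h1; rewrite -leNgt => h1.
    by apply: Or33; split => //; left; have := y0 t; lra.
  - rewrite h /= in h3; move/negbT: h3; rewrite -leNgt => h3.
    by apply: Or33; split => //; right; right; have := y1 t; lra.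
  - by apply: Or33; split => //; right; left.
have Z : forall t0, -(d/2) <= t0 -> t0 <= d/2 -> inP e (fun u => y u + t0 * g u).
  move=> t0 ta tb [u|[u w]] /= rr.
    by case: (F u) => [[-> ? ?]|[-> ? ?]|[-> [->|[->|->]]]]; have := y0 u; lra.
  have := Py (inr (u, w)) rr; rewrite /=.
  by case: (F u) => [[-> ? ?]|[-> ? ?]|[-> [->|[->|->]]]];
     case: (F w) => [[-> ? ?]|[-> ? ?]|[-> [->|[->|->]]]]; lra.
have EE : forall u, y u = 1/2 * (y u + d/2 * g u) + 1/2 * (y u + -(d/2) * g u) by move=> u; field.
have E := vertex_half vy (Z (d/2) ltac:(lra) ltac:(lra)) (Z (-(d/2)) ltac:(lra) ltac:(lra)) EE.
move=> u; have := congr1 (fun f => f u) E => /= Eu.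
case: (F u) => [[hg ? ?]|[hg ? ?]|[_ h]] //.
- by rewrite hg in Eu; lra.
- by rewrite hg in Eu; lra.
Qed.

Lemma BI (y : T -> R) : ~~ nb -> vertex e y -> (forall u, y u = 0 \/ y u = 1/2 \/ y u = 1) ->
  forall u, y u = 0 \/ y u = 1.
Proof.
move=> nnb vy hy.
have Py := vy.1.
have sg : forall t, sgn (dd t) = 1 \/ sgn (dd t) = -1 by move=> t; rewrite /sgn; case: odd; [right|left].
have opp : forall u w, e u w -> sgn (dd u) = - sgn (dd w).
  move=> u w ew; rewrite /sgn.
  case hu: (odd (dd u)); case hw: (odd (dd w)) => /=; rewrite ?opprK //;
  by exfalso; apply: (nb_stab nnb (n := (dd u).+1) ew (same_layer ew (etrans hu (Logic.eq_sym hw))) (ltnSn _)).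
pose z (c : R) := fun t => if y t == 1/2 then 1/2 + c * sgn (dd t) else y t.
have Zc : forall c, -(1/2) <= c -> c <= 1/2 -> inP e (z c).
  move=> c ca cb [u|[u w]] /= rr.
    rewrite /z; case: eqP => _; last by rewrite oppr_le0; apply: inP_ge0.
    by case: (sg u) => ->; lra.
  have := Py (inr (u, w)) rr; rewrite /= /z.
  case: eqP => hu; case: eqP => hw.
  - by rewrite (opp u w rr); lra.
  - by case: (hy w) => [->|[?|->]]; [case: (sg u) => ->; lra|done|lra].
  - by case: (hy u) => [->|[?|->]]; [case: (sg w) => ->; lra|done|lra].
  - done.
have EE : forall u, y u = 1/2 * z (1/2) u + 1/2 * z (-(1/2)) u.
  by move=> u; rewrite /z; case: eqP => [->|_]; field.
have E := vertex_half vy (Zc (1/2) ltac:(lra) ltac:(lra)) (Zc (-(1/2)) ltac:(lra) ltac:(lra)) EE.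
move=> u; case: (hy u) => [->|[h|->]]; [by left| |by right].
have := congr1 (fun f => f u) E; rewrite /z h eqxx.
by case: (sg u) => ->; lra.
Qed.

End Root.

Lemma main_G (v : T) (k : nat) : is_eccentricity e v k ->
  forall x y : T -> R, vertex e x -> vertex e y ->
  exists l, (l <= 41 * k)%N /\ circuit_walk e x y l.
Proof.
move=> [wk _] x y vx vy.
have inb : forall u, u \in ball e v k.
  move=> u; have [p [pp lp sp]] := wk u.
  apply: (ball_mono sp); rewrite -lp -[size p]add0n; apply: ball_path => //.
  by rewrite ball0.
have dK : forall u, (dist conn v u <= k)%N by move=> u; apply: dist_min.
have k1 : (0 < k)%N.
  case/card_gt1P: card2 => a [b [_ _ ab]].
  rewrite lt0n; apply/eqP => k0; move: ab.
  have := dK a; have := dK b; rewrite k0 !leqn0 => /eqP /dist_eq0 -> /eqP /dist_eq0 ->.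
  by rewrite eqxx.
have Px := vx.1; have Py := vy.1.
have hx := @HI v x vx; have hy := @HI v y vy.
have P0 : inP e (fun _ : T => (0 : R)) by move=> [u|[u w]] /= _; rewrite ?oppr0 ?addr0.
have [lA [hlA WA]] : exists l, (l <= 12 * k + 5)%N /\ circuit_walk e x (fun _ => 0) l.
  case: (boolP [forall u, (x u == 0) || (x u == 1)]) => [/forallP H|/forallPn [u0 Hu0]].
    have hxi : forall u, x u = 0 \/ x u = 1.
      by move=> u; case/orP: (H u) => /eqP ->; [left|right].
    have [l1 [hl1 W1]] := @hub_int v x k dK Px hxi.
    exists (l1 + 1)%N; split; first by move: hl1; clear; lia.
    exact: cw_cat W1 (cw_one (@hub_zero v)).
  have xu0 : x u0 = 1/2.
    by move: Hu0; rewrite negb_or; case: (hx u0) => [->|[->|->]]; rewrite ?eqxx ?andbF.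
  have dK' : forall u, (dist conn u0 u <= k + k)%N.
    move=> u; apply: dist_min; apply: ball_trans (inb u).
    exact: (ball_sym esym (inb u0)).
  have [l1 [hl1 W1]] := @half_to_zero u0 x (k + k) dK' Px hx xu0.
  by exists l1; split => //; move: hl1; clear; lia.
have [lB [hlB WB]] := @hub_int v (fun _ => 0) k dK P0 (fun _ => or_introl erefl).
have [lC [hlC WC]] := @hub_y v y k dK Py hy (fun nnb => @BI v y nnb vy hy).
exists (lA + (lB + lC))%N; split; first by move: hlA hlB hlC k1; clear; lia.
exact: cw_cat WA (cw_cat WB WC).
Qed.

End G.

Theorem lemma10 (R : realType) :
  exists C : R, forall (T : finType) (e : rel T),
    symmetric e -> irreflexive e ->
    (1 < #|T|)%N -> (forall u w : T, connect e u w) ->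
    forall (v : T) (k : nat), is_eccentricity e v k ->
    forall x y : T -> R, vertex e x -> vertex e y ->
    exists l : nat, l%:R <= C * k%:R /\ circuit_walk e x y l.
Proof.
exists 41%:R => T e esym eirr card2 conn v k ecc x y vx vy.
have [l [hl W]] := main_G esym eirr conn card2 ecc vx vy.
by exists l; split => //; rewrite -natrM ler_nat.
Qed.
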